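(* Let $\Gamma$ be an orthosymmetric, convex, compact set, $\epsilon>0$, and $d=D_{\mathsf c}(\Gamma,\epsilon)-1\ge1$. Then there exist pairwise orthogonal vectors $\mathbf u_1,\dots,\mathbf u_{\lfloor d/2\rfloor}\in\Gamma$ such that $\|\mathbf u_i\|\ge\epsilon/\sqrt d$ for every $1\le i\le\lfloor d/2\rfloor$.
   Context: Orthosymmetric: closed under flipping signs of any coordinates. Coordinate-wise Kolmogorov dimension $D_{\mathsf c}(\Gamma,\epsilon)$: the smallest integer $k$ such that some set $A$ of $k$ coordinate indices satisfies $\sup_{\boldsymbol\theta\in\Gamma}\sum_{i\notin A}\theta_i^2\le\epsilon^2$. *)

(* Defs.v *)
From HB Require Import structures.
From mathcomp Require Import all_boot all_order all_algebra.
From mathcomp Require Import all_classical all_reals all_analysis.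
Set Implicit Arguments. Unset Strict Implicit. Unset Printing Implicit Defensive.
Import Order.TTheory GRing.Theory Num.Theory.
Import numFieldNormedType.Exports.
Local Open Scope classical_set_scope.
Local Open Scope ring_scope.

Definition dotv {R : realType} {n : nat} (x y : 'rV[R]_n) : R :=
  \sum_(i < n) x 0 i * y 0 i.
Definition enorm {R : realType} {n : nat} (x : 'rV[R]_n) : R :=
  Num.sqrt (dotv x x).

Definition orthosymmetric {R : realType} {n : nat} (G : set 'rV[R]_n) : Prop :=
  forall (x : 'rV[R]_n) (s : {set 'I_n}), G x ->
    G (\row_i (if i \in s then - x 0 i else x 0 i)).

Definition convexR {R : realType} {n : nat} (G : set 'rV[R]_n) : Prop :=
  forall (x y : 'rV[R]_n) (t : R), G x -> G y -> 0 <= t -> t <= 1 ->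
    G (t *: x + (1 - t) *: y).

Definition coord_ok {R : realType} {n : nat} (G : set 'rV[R]_n) (eps : R)
  (k : nat) : Prop :=
  exists A : {set 'I_n}, #|A| = k /\
    forall th : 'rV[R]_n, G th -> \sum_(i in ~: A) th 0 i ^+ 2 <= eps ^+ 2.

Lemma coord_ok_ex {R : realType} {n : nat} (G : set 'rV[R]_n) (eps : R) :
  exists k, `[< coord_ok G eps k >].
Proof.
exists n; apply/asboolP; exists [set: 'I_n]%SET; split; first by rewrite cardsT card_ord.
by move=> th _; rewrite big1 ?sqr_ge0 // => i; rewrite !inE.
Qed.

Definition Dc {R : realType} {n : nat} (G : set 'rV[R]_n) (eps : R) : nat :=
  ex_minn (coord_ok_ex G eps).

(* Main.v *)
Require Import Defs.
From HB Require Import structures.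
From mathcomp Require Import all_boot all_order all_algebra.
From mathcomp Require Import all_classical all_reals all_analysis.
From mathcomp Require Import zify ring lra.
Import Order.TTheory GRing.Theory Num.Theory.
Import numFieldNormedType.Exports.
Local Open Scope classical_set_scope.
Local Open Scope ring_scope.
Local Close Scope classical_set_scope.

Definition sqs {R : realType} {n : nat} (th : 'rV[R]_n) (S : {set 'I_n}) : R :=
  \sum_(i in S) th 0 i ^+ 2.
Definition bigS {R : realType} {n : nat} (G : set 'rV[R]_n) (c : R) (S : {set 'I_n}) :=
  exists th, G th /\ c <= sqs th S.

Lemma notbigP (R : realType) (n : nat) (G : set 'rV[R]_n) (c : R) (S : {set 'I_n}) :
  ~ bigS G c S -> forall th, G th -> sqs th S < c.
Proof.
move=> nb th Gth; rewrite ltNge; apply/negP => h; apply: nb; by exists th.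
Qed.

Lemma sqs_sub (R : realType) (n : nat) (th : 'rV[R]_n) (A S T : {set 'I_n}) :
  A \subset S :|: T -> sqs th A <= sqs th S + sqs th T.
Proof.
move=> sA; rewrite /sqs !(big_mkcond (fun i => i \in _)) /= -big_split /=.
apply: ler_sum => i _.
have h := sqr_ge0 (th 0 i).
have : (i \in A) ==> (i \in S) || (i \in T).
  by apply/implyP => /(fintype.subsetP sA); rewrite inE.
case: (i \in A); case: (i \in S); case: (i \in T) => //= _; lra.
Qed.

Lemma sqs0 (R : realType) (n : nat) (th : 'rV[R]_n) : sqs th finset.set0 = 0.
Proof. by rewrite /sqs big_set0. Qed.

Lemma sqs1 (R : realType) (n : nat) (th : 'rV[R]_n) (x : 'I_n) : sqs th [set x]%SET = th 0 x ^+ 2.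
Proof. by rewrite /sqs big_set1. Qed.

Lemma sqsD1 (R : realType) (n : nat) (th : 'rV[R]_n) (x : 'I_n) (S : {set 'I_n}) :
  x \in S -> sqs th S = th 0 x ^+ 2 + sqs th (S :\ x).
Proof. by move=> xS; rewrite /sqs (big_setD1 x xS). Qed.

Arguments notbigP {R n G c S}.
Arguments sqs_sub {R n} th {A S T}.
Arguments sqs0 {R n}.
Arguments sqs1 {R n}.
Arguments sqsD1 {R n} th {x S}.

Lemma minimalS (R : realType) (n : nat) (G : set 'rV[R]_n) (c : R) (S : {set 'I_n}) :
  bigS G c S -> exists S' : {set 'I_n}, S' \subset S /\ bigS G c S' /\
    forall x, x \in S' -> ~ bigS G c (S' :\ x).
Proof.
have [k] := ubnP #|S|; elim: k S => // k IH S; rewrite ltnS => HS bS.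
case: (pselect (exists x, x \in S /\ bigS G c (S :\ x))) => [[x [xS b]]|nx].
- have [|S' [sub [b' m]]] := IH (S :\ x) _ b.
    by move: HS; rewrite (cardsD1 x S) xS add1n.
  exists S'; split; last by []; exact: fintype.subset_trans sub (subD1set S x).
- exists S; split; first exact: fintype.subxx.
  split => // x xS b; apply: nx; by exists x.
Qed.

Arguments minimalS {R n G c S}.

Lemma main_rec (R : realType) (n : nat) (G : set 'rV[R]_n) (c : R) (c0 : 0 < c)
  (U : {set 'I_n}) : exists (L : seq {set 'I_n}) (B : {set 'I_n}),
 (forall i, (i < size L)%N -> nth finset.set0 L i \subset U /\ bigS G c (nth finset.set0 L i)) /\
 (forall i j, (i < size L)%N -> (j < size L)%N -> i != j ->
     [disjoint nth finset.set0 L i & nth finset.set0 L j]) /\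
 (#|B| <= size L)%N /\
 (forall th, G th -> sqs th (U :\: B) < (2 * size L + 1)%:R * c).
Proof.
have [k] := ubnP #|U|; elim: k U => // k IH U; rewrite ltnS => HU.
case: (pselect (exists x, x \in U /\ bigS G c [set x]%SET)) => [[x [xU bx]]|nx].
- have [|L [B [HL [HD [HB Hs]]]]] := IH (U :\ x).
    by move: HU; rewrite (cardsD1 x U) xU add1n.
  exists ([set x]%SET :: L), (x |: B); split; [|split; [|split]].
  + case=> [|i] /= Hi; first by split => //; rewrite finset.sub1set.
    have [s b] := HL i Hi; split => //; exact: fintype.subset_trans s (subD1set U x).
  + have key : forall i, (i < size L)%N -> [disjoint [set x]%SET & nth finset.set0 L i].
      move=> i Hi; rewrite disjoints1; apply/negP => /(fintype.subsetP (proj1 (HL i Hi))).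
      by rewrite !inE eqxx.
    case=> [|i] [|j] //= Hi Hj Hij; first exact: key.
      rewrite disjoint_sym; exact: key.
    exact: HD.
  + by rewrite cardsU1; apply: leq_trans (leq_add (leq_b1 _) HB) _.
  + move=> th Gth; apply: le_lt_trans (_ : _ <= sqs th ((U :\ x) :\: B)) _.
      rewrite -[X in _ <= X]addr0 -(sqs0 th); apply: sqs_sub.
      by apply/fintype.subsetP => y; rewrite !inE; case: (y == x); case: (y \in B); case: (y \in U).
    apply: lt_le_trans (Hs th Gth) _.
    rewrite ler_pM2r // ler_nat /=; lia.
- case: (pselect (bigS G c U)) => bU; last first.
    exists [::], finset.set0; split; [by move=> i|split; [by move=> i|split]].
    + by rewrite cards0.
    + move=> th Gth; rewrite finset.setD0 /= muln0 add0n mul1r.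
      exact: notbigP bU th Gth.
  have [S [sSU [bS mS]]] := minimalS bU.
  have [x xS] : exists x, x \in S.
    case: (set_0Vmem S) => [S0|[x xS]]; last by exists x.
    move: bS; rewrite S0 => -[th [_]]; rewrite sqs0 leNgt c0 //.
  have xU : x \in U by exact: (fintype.subsetP sSU).
  have [|L [B [HL [HD [HB Hs]]]]] := IH (U :\: S).
    apply: leq_ltn_trans (subset_leq_card (_ : U :\: S \subset U :\ x)) _.
      apply/fintype.subsetP => y; rewrite !inE => /andP[yS ->]; rewrite andbT; apply/eqP => yx; by move: yS; rewrite yx xS.
    by move: HU; rewrite (cardsD1 x U) xU add1n.
  have key : forall i, (i < size L)%N -> [disjoint S & nth finset.set0 L i].
    move=> i Hi; rewrite -finset.setI_eq0; apply/eqP/setP => y; rewrite !inE.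
    case yS: (y \in S) => //=; apply/negP => /(fintype.subsetP (proj1 (HL i Hi))).
    by rewrite !inE yS.
  exists (S :: L), B; split; [|split; [|split]].
  + case=> [|i] /= Hi; first by split.
    have [s b] := HL i Hi; split => //; exact: fintype.subset_trans s (finset.subsetDl U S).
  + case=> [|i] [|j] //= Hi Hj Hij; first exact: key.
      rewrite disjoint_sym; exact: key.
    exact: HD.
  + by apply: leq_trans HB _.
  + move=> th Gth; apply: le_lt_trans (_ : _ <= sqs th S + sqs th ((U :\: S) :\: B)) _.
      apply: sqs_sub.
      by apply/fintype.subsetP => y; rewrite !inE; case: (y \in S); case: (y \in B); case: (y \in U).
    have h1 : sqs th S < c + c.
      rewrite (sqsD1 th xS) addrC; apply: ltrD.
        exact: notbigP (mS x xS) th Gth.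
      rewrite -sqs1; apply: notbigP Gth => b; apply: nx; by exists x.
    have h2 := Hs th Gth.
    have -> : (2 * (size (S :: L)) + 1)%:R * c = 2%:R * c + (2 * size L + 1)%:R * c.
      by rewrite -mulrDl -natrD /=; congr (_%:R * c); lia.
    lra.
Qed.

Arguments main_rec {R n} G {c} c0 U.

Lemma proj_in (R : realType) (n : nat) (G : set 'rV[R]_n) (S : {set 'I_n}) th :
  orthosymmetric G -> convexR G -> G th ->
  G (\row_j (if j \in S then th 0 j else 0)).
Proof.
move=> os cv Gth; have Gf := os th (~: S) Gth.
have := cv _ _ (2^-1) Gth Gf; rewrite invr_ge0 ler0n invf_le1 ?ler1n ?ltr0n //.
move=> /(_ isT isT).
suff -> : (\row_j (if j \in S then th 0 j else 0)) =
  2^-1 *: th + (1 - 2^-1) *: (\row_i (if i \in ~: S then - th 0 i else th 0 i)) by [].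
apply/rowP => j; rewrite !mxE inE; case: (j \in S) => /=; field; rewrite ?pnatr_eq0 //.
Qed.

Arguments proj_in {R n G} S {th}.
Local Open Scope classical_set_scope.

Theorem mainTheorem16 (R : realType) (n : nat) (G : set 'rV[R]_n) (eps : R)
  (d : nat) :
  orthosymmetric G -> convexR G -> compact G -> 0 < eps ->
  Dc G eps = d.+1 -> (1 <= d)%N ->
  exists u : 'I_(d./2) -> 'rV[R]_n,
    (forall i, G (u i)) /\
    (forall i j, i != j -> dotv (u i) (u j) = 0) /\
    (forall i, eps / Num.sqrt (d%:R) <= enorm (u i)).
Proof.
move=> os cv _ eps0 hD d1.
have minD : forall k, coord_ok G eps k -> (d.+1 <= k)%N.
  move=> k ck; rewrite -hD /Dc; case: ex_minnP => m _ Hm; apply: Hm; exact/asboolP.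
set c := eps ^+ 2 / d%:R.
have dpos : 0 < d%:R :> R by rewrite ltr0n; lia.
have c0 : 0 < c by rewrite divr_gt0 // exprn_gt0.
have [L [B [HL [HD [HB Hs]]]]] := main_rec G c0 [set: 'I_n]%SET.
have sizeL : (d./2 <= size L)%N.
  rewrite leqNgt; apply/negP => hlt.
  have hdd : (d./2 <= d)%N by apply: leq_trans (half_leq (leq_addl d d)) _; rewrite addnn doubleK.
  have nck : ~ coord_ok G eps #|B|.
    move=> ck; have := minD _ ck; lia.
  apply: nck; exists B; split => // th Gth; rewrite leNgt; apply/negP => h.
  have := Hs th Gth; rewrite finset.setTD => h2.
  have e2 : eps ^+ 2 = d%:R * c by rewrite /c mulrC divfK // gt_eqF.
  have : d%:R * c < (2 * size L + 1)%:R * c.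
    rewrite -e2; apply: lt_trans h h2.
  rewrite ltr_pM2r // ltr_nat => hd.
  have : (d./2 <= (2 * size L)./2)%N by apply: half_leq; lia.
  rewrite mul2n doubleK; lia.
have ex : forall i : 'I_(d./2), exists v : 'rV[R]_n, G v /\
    (forall j, j \notin nth finset.set0 L i -> v 0 j = 0) /\ c <= dotv v v.
  move=> i; have iL : (i < size L)%N := leq_trans (ltn_ord i) sizeL.
  have [_ [th [Gth hth]]] := HL i iL.
  exists (\row_j (if j \in nth finset.set0 L i then th 0 j else 0)); split; first exact: proj_in.
  split; first by move=> j /negbTE hj; rewrite mxE hj.
  apply: le_trans hth _; rewrite /sqs /dotv (big_mkcond (fun j => j \in _)) /=.
  apply: ler_sum => j _; rewrite mxE; case: ifP => _; by rewrite ?expr2 ?mulr0.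
have [u Hu] := choice ex.
exists u; split; [|split].
- by move=> i; case: (Hu i).
- move=> i j ij; rewrite /dotv big1 // => k _.
  have iL : (i < size L)%N := leq_trans (ltn_ord i) sizeL.
  have jL : (j < size L)%N := leq_trans (ltn_ord j) sizeL.
  have Dij := HD i j iL jL ij.
  case: (boolP (k \in nth finset.set0 L i)) => ki.
    have kj : k \notin nth finset.set0 L j by rewrite (disjointFr Dij ki).
    by rewrite (proj1 (proj2 (Hu j)) k kj) mulr0.
  by rewrite (proj1 (proj2 (Hu i)) k ki) mul0r.
- move=> i; have [_ [_ hc]] := Hu i; rewrite /enorm.
  have e0 : 0 <= eps / Num.sqrt d%:R by rewrite divr_ge0 ?sqrtr_ge0 // ltW.
  rewrite -(ger0_norm e0) -sqrtr_sqr ler_sqrt; last exact: le_trans (ltW c0) hc.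
  by rewrite expr_div_n sqr_sqrtr ?ler0n.
Qed.
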